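(* Let $k\geq 3$ be an integer. Then every hypomatchable graph $G$ with $|V(G)|\geq 2k+1$ that has no $\{P_{2},P_{2k+1}\}$-factor contains a set $X\subseteq V(G)$ with $|X|\geq 5$ such that $$\sum_{0\leq j\leq k-1} c_{2j+1}(G-X)\geq \frac{1}{k^{2}}|X|.$$ In other words, $\left(\frac{1}{k^{2}},5\right)$ is a $(k,\{P_{2},P_{2k+1}\})$-good pair.
   Context: A graph $H$ is hypomatchable if $H-u$ has a perfect matching for every $u\in V(H)$. For a graph $H$ and $j\geq 1$, $c_{j}(H)$ is the number of components of $H$ with exactly $j$ vertices. For an integer $k\geq 1$ and a set $\mathcal{F}$ of connected graphs with $P_2\in\mathcal{F}$, a pair $(\varepsilon,\lambda)$ with $\varepsilon>0$ real and $\lambda$ a positive integer is called $(k,\mathcal{F})$-good if every hypomatchable graph $G$ of order at least $2k+1$ having no $\mathcal{F}$-factor has a set $X\subseteq V(G)$ with $|X|\geq\lambda$ and $\sum_{0\leq j\leq k-1}c_{2j+1}(G-X)\geq \varepsilon|X|$. An $\mathcal{F}$-factor is a spanning subgraph each of whose components is isomorphic to a member of $\mathcal{F}$. *)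

(* Defs.v *)
From mathcomp Require Import all_boot all_order all_algebra.
Set Implicit Arguments. Unset Strict Implicit. Unset Printing Implicit Defensive.

Definition simple_graph (T : finType) (e : rel T) : Prop :=
  symmetric e /\ irreflexive e.

Definition perfect_matching_on (T : finType) (e : rel T) (S : {set T})
    (M : rel T) : Prop :=
  symmetric M /\
  (forall x y, M x y -> [&& x \in S, y \in S & e x y]) /\
  (forall x, x \in S -> #|[set y | M x y]| = 1%N).

Definition hypomatchable (T : finType) (e : rel T) : Prop :=
  forall u : T, exists M : rel T, perfect_matching_on e (~: [set u]) M.

Definition iso_path (T : finType) (H : rel T) (C : {set T}) (n : nat) : Prop :=
  exists f : 'I_n -> T,
    injective f /\ (forall y, y \in C <-> exists i, f i = y) /\
    (forall i j : 'I_n, H (f i) (f j) = ((i.+1 == j) || (j.+1 == i))%N).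

Definition component (T : finType) (H : rel T) (x : T) : {set T} :=
  [set y | connect H x y].

Definition has_P2_P2kp1_factor (T : finType) (e : rel T) (k : nat) : Prop :=
  exists H : rel T,
    symmetric H /\ (forall x y, H x y -> e x y) /\
    (forall x : T, iso_path H (component H x) 2 \/
                   iso_path H (component H x) (2 * k + 1)).

Definition del_rel (T : finType) (e : rel T) (X : {set T}) : rel T :=
  fun x y => [&& x \notin X, y \notin X & e x y].

Definition components_del (T : finType) (e : rel T) (X : {set T})
  : {set {set T}} :=
  [set component (del_rel e X) x | x in ~: X].

Definition c_comp (T : finType) (e : rel T) (X : {set T}) (j : nat) : nat :=
  #|[set C in components_del e X | #|C| == j]|.

(* Main.v *)
Require Import Defs.
From mathcomp Require Import all_boot all_order all_algebra.
Import Order.TTheory GRing.Theory Num.Theory.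
From mathcomp Require Import zify.
Set Implicit Arguments. Unset Strict Implicit.
Lemma closure_conn (T : finType) (H : rel T) (S : {set T}) :
  (forall a b, a \in S -> H a b -> b \in S) ->
  forall x y, x \in S -> connect H x y -> y \in S.
Proof.
move=> cl x y xS /connectP[p pth ->]; elim: p x xS pth => //= a p IH x xS /andP[hxa pa].
exact: IH (cl _ _ xS hxa) pa.
Qed.

Lemma partner_uniq (T : finType) (e : rel T) S M x y z :
  perfect_matching_on e S M -> x \in S -> M x y -> M x z -> y = z.
Proof.
move=> [_ [_ c1]] xS my mz; have /eqP/cards1P[w hw] := c1 x xS.
have : y \in [set y | M x y] by rewrite inE.
have : z \in [set y | M x y] by rewrite inE.
by rewrite hw !inE => /eqP -> /eqP ->.
Qed.

Lemma partner_ex (T : finType) (e : rel T) S M x :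
  perfect_matching_on e S M -> x \in S -> exists y, M x y.
Proof.
move=> [_ [_ c1]] xS; have /eqP/cards1P[w hw] := c1 x xS.
exists w; have : w \in [set y | M x y] by rewrite hw inE.
by rewrite inE.
Qed.

Lemma path_exists (T : finType) (e : rel T) (k : nat) (u : T) M :
  simple_graph e -> perfect_matching_on e (~: [set u]) M ->
  (forall v, 2 * k - 1 <= #|[set w | e v w]|)%N ->
  forall t, (t <= k)%N -> exists r : seq T,
    [/\ uniq (u :: r), path e u r, size r = 2 * t &
     forall x, x \in u :: r -> x != u -> forall y, M x y -> y \in u :: r].
Proof.
move=> [sym irr] pm deg; elim=> [|t IH] ht.
  exists [::]; split => //= x; rewrite inE => /eqP ->; by rewrite eqxx.
have [r [ur pr sr cl]] := IH (ltnW ht).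
set b := last u r.
have [a ea ans] : exists2 a, e b a & a \notin u :: r.
  case: (boolP [exists a, e b a && (a \notin u :: r)]) => [/existsP[a /andP[h1 h2]]|none].
    by exists a.
  exfalso; move: none; rewrite negb_exists => /forallP all.
  have sub : [set w | e b w] \subset [set w in u :: r] :\ b.
    apply/subsetP => w; rewrite inE => ebw; rewrite in_setD1 inE.
    have := all w; rewrite ebw /= negbK => ->.
    rewrite andbT; apply/eqP => wb; by rewrite wb irr in ebw.
  have h1 := subset_leq_card sub.
  have h2 := cardsD1 b [set w in u :: r].
  rewrite inE /b mem_last cardsE in h2.
  move/card_uniqP: ur h2 => -> /=. rewrite sr => h2.
  rewrite -/b in h2. move: (deg b) h1 h2 ht. move: #|[set w | e b w]| #|[set w in u :: r] :\ b| => n1 n2. lia.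
have aS : a \in ~: [set u].
  rewrite !inE; apply/eqP => au; by rewrite au mem_head in ans.
have [c mac] := partner_ex pm aS.
have [_ [Me _]] := pm.
have /and3P[_ cS eac] := Me _ _ mac.
have cns : c \notin u :: r.
  apply/negP => cin; have cu : c != u by move: cS; rewrite !inE.
  have := cl c cin cu a; rewrite (proj1 pm) mac => /(_ isT).
  by rewrite (negbTE ans).
have ac : a != c by apply/eqP => ac; rewrite ac irr in eac.
exists (r ++ [:: a; c]); split.
- rewrite -cat_cons cat_uniq ur /= (negbTE ans) (negbTE cns) inE ac. done.
- by rewrite cat_path pr /= ea eac.
- rewrite size_cat sr /=; lia.
- move=> x; rewrite -cat_cons mem_cat => /orP[xin xu y mxy|].
    by rewrite mem_cat (cl x xin xu y mxy).
  rewrite !inE => /orP[]/eqP -> _ y my; rewrite mem_cat !inE.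
    by rewrite (partner_uniq pm aS my mac) eqxx !orbT.
  have cS' : c \in ~: [set u] by [].
  have mca : M c a by rewrite (proj1 pm).
  by rewrite (partner_uniq pm cS' my mca) eqxx !orbT.
Qed.
Lemma factor_from_path (T : finType) (e : rel T) k u M r :
  simple_graph e -> perfect_matching_on e (~: [set u]) M ->
  uniq (u :: r) -> path e u r -> size r = 2 * k ->
  (forall x, x \in u :: r -> x != u -> forall y, M x y -> y \in u :: r) ->
  has_P2_P2kp1_factor e k.
Proof.
move=> [sym irr] pm ur pr sr cl.
set s := u :: r.
have hsz : size s = 2 * k + 1 by rewrite /= sr addn1.
pose p := fun i : 'I_(2 * k + 1) => nth u s i.
pose H := [rel x y | if (x \in s) || (y \in s) then
   [exists i : 'I_(2 * k + 1), exists j : 'I_(2 * k + 1),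
      [&& p i == x, p j == y & (i.+1 == j) || (j.+1 == i)]] else M x y].
have pin : forall i, p i \in s by move=> i; rewrite /p mem_nth // hsz.
have pinj : injective p.
  move=> i j /eqP; rewrite /p nth_uniq ?hsz // => /eqP; exact: val_inj.
have hpadj : forall i j, H (p i) (p j) = ((i.+1 == j) || (j.+1 == i)).
  move=> i j; rewrite /= pin /=; apply/existsP/idP.
    by case=> i' /existsP[j' /and3P[/eqP/pinj -> /eqP/pinj -> ]].
  by move=> h; exists i; apply/existsP; exists j; rewrite !eqxx h.
have HinS : forall x y, H x y -> x \in s -> y \in s.
  move=> x y /=; case: ifP => hc; last by move=> _ xs; rewrite xs in hc.
  by case/existsP=> i /existsP[j /and3P[_ /eqP <- _]].
have Hout : forall x y, x \notin s -> H x y -> (y \notin s) && M x y.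
  move=> x y xs /=; rewrite (negbTE xs) /=; case: ifP => ys.
    by case/existsP=> i /existsP[j /and3P[/eqP hx _ _]]; rewrite -hx pin in xs.
  by move=> ->.
have Hsym : symmetric H.
  move=> x y /=; rewrite orbC; case: ifP => _; last by rewrite (proj1 pm).
  apply/existsP/existsP => [][i /existsP[j /and3P[h1 h2 h3]]];
   exists j; apply/existsP; exists i; by rewrite h1 h2 orbC h3.
have pe : forall i : nat, (i.+1 < size s)%N -> e (nth u s i) (nth u s i.+1).
  move=> i hi; move/(pathP u): pr => /(_ i); apply; by rewrite /= ltnS in hi.
exists H; split => //; split.
  move=> x y /=; case: ifP => _; last by move/(proj1 (proj2 pm)) => /and3P[].
  case/existsP=> i /existsP[j /and3P[/eqP <- /eqP <- /orP[]/eqP hij]].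
    rewrite /p /=; move: hij; case: j => /= j hj hij; subst j; apply: pe; by rewrite hsz.
  rewrite /p /=; move: hij; case: i => /= i hi hij; subst i; rewrite sym; apply: pe; by rewrite hsz.
have conn_u : forall i, (i < size s)%N -> connect H u (nth u s i).
  elim=> [|i IH] hi; first exact: connect0.
  apply: connect_trans (IH (ltnW hi)) (connect1 _).
  have hi' : (i < 2 * k + 1)%N by rewrite -hsz ltnW.
  have hi1 : (i.+1 < 2 * k + 1)%N by rewrite -hsz.
  have := hpadj (Ordinal hi') (Ordinal hi1); rewrite /p /= eqxx => ->. done.
move=> x; case: (boolP (x \in s)) => xs.
  right; exists p; split => //; split => // y.
  have compE : y \in component H x <-> y \in s.
    rewrite inE; split => [hc|ys].
      have cl' : forall a b, a \in [set z in s] -> H a b -> b \in [set z in s].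
        by move=> a b; rewrite !inE => ha hab; exact: HinS hab ha.
      have xS' : x \in [set z in s] by rewrite inE.
      by have := closure_conn cl' xS' hc; rewrite inE.
    have := conn_u (index x s); rewrite index_mem nth_index // => /(_ xs) hx.
    have := conn_u (index y s); rewrite index_mem nth_index // => /(_ ys) hy.
    rewrite (sym_connect_sym Hsym) in hx.
    exact: connect_trans hx hy.
  rewrite compE; split => [ys|[i <-]] //.
  have hi : (index y s < 2 * k + 1)%N by rewrite -hsz index_mem.
  by exists (Ordinal hi); rewrite /p nth_index.
left.
have xu : x \in ~: [set u].
  rewrite !inE; apply/eqP => xu; by rewrite xu mem_head in xs.
have [c mxc] := partner_ex pm xu.
have [_ [Me _]] := pm.
have /and3P[_ cS exc] := Me _ _ mxc.
have cs : c \notin s.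
  apply/negP => cin; have cu : c != u by move: cS; rewrite !inE.
  have := cl c cin cu x; rewrite (proj1 pm) mxc => /(_ isT).
  by rewrite (negbTE xs).
have xc : x != c by apply/eqP => xc; rewrite xc irr in exc.
have mcx : M c x by rewrite (proj1 pm).
have Hout2 : forall a b, a \notin s -> b \notin s -> H a b = M a b.
  by move=> a b ha hb /=; rewrite (negbTE ha) (negbTE hb).
have compE : forall y, y \in component H x <-> (y == x) || (y == c).
  move=> y; rewrite inE; split => [hc|/orP[]/eqP ->]; last 2 first.
  - exact: connect0.
  - by apply: connect1; rewrite /= (negbTE xs) (negbTE cs).
  have cl' : forall a b, a \in [set x; c] -> H a b -> b \in [set x; c].
    move=> a b; rewrite !inE => /orP[]/eqP -> hab.
    - have /andP[bs mb] := Hout _ _ xs hab.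
      by rewrite (partner_uniq pm xu mb mxc) eqxx orbT.
    - have /andP[bs mb] := Hout _ _ cs hab.
      by rewrite (partner_uniq pm cS mb mcx) eqxx.
  have xS' : x \in [set x; c] by rewrite !inE eqxx.
  by have := closure_conn cl' xS' hc; rewrite !inE.
pose f := fun i : 'I_2 => if val i == 0%N then x else c.
exists f; split; [|split].
- move=> [[|[|i]] hi] [[|[|j]] hj] //=; rewrite /f /= => h; apply: val_inj => //=;
    first [by rewrite h eqxx in xc | by rewrite h eqxx in xc].
- move=> y; rewrite compE; split => [/orP[]/eqP ->|[[[|[|i]] hi] <-]] //.
  + by exists (@Ordinal 2 0 isT).
  + by exists (@Ordinal 2 1 isT).
  + by rewrite /f /= eqxx.
  + by rewrite /f /= eqxx orbT.
- move=> [[|[|i]] hi] [[|[|j]] hj] //=; rewrite /f /= ?(negbTE xs) ?(negbTE cs) /= ?mxc ?mcx //;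
    apply/negP => /Me /and3P[_ _]; by rewrite irr.
Qed.

Theorem proposition3p1 (k : nat) (T : finType) (e : rel T) :
  (3 <= k)%N ->
  simple_graph e ->
  hypomatchable e ->
  (2 * k + 1 <= #|T|)%N ->
  ~ has_P2_P2kp1_factor e k ->
  exists X : {set T},
    (5 <= #|X|)%N /\
    ((#|X|%:R / (k ^ 2)%:R : rat) <= (\sum_(0 <= j < k) c_comp e X (2 * j + 1))%:R)%R.
Proof.
move=> k3 sg hm hT nofac.
case: (boolP [exists v, #|[set w | e v w]| < 2 * k - 1]) => [/existsP[v dv] | hdeg]; last first.
  exfalso; apply: nofac.
  have deg : forall v, (2 * k - 1 <= #|[set w | e v w]|)%N.
    move=> v; move: hdeg; rewrite negb_exists => /forallP/(_ v); by rewrite -leqNgt.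
  have /card_gt0P[u _] : (0 < #|T|)%N by lia.
  have [M pm] := hm u.
  have [r [ur pr sr cl]] := path_exists sg pm deg (leqnn k).
  exact: factor_from_path sg pm ur pr sr cl.
set N := [set w | e v w].
have [Y [Ysub Ycard]] : exists Y : {set T}, Y \subset ~: [set v] /\ #|Y| = 5.
  exists [set x in take 5 (enum (~: [set v]))]; split.
    by apply/subsetP => x; rewrite inE => /mem_take; rewrite mem_enum.
  rewrite cardsE; move/card_uniqP: (take_uniq 5 (enum_uniq (mem (~: [set v])))) => ->.
  rewrite size_takel // -cardE cardsC1; lia.
set X := N :|: Y.
have vX : v \notin X.
  rewrite in_setU negb_or inE (proj2 sg) /=.
  by apply/negP => /(subsetP Ysub); rewrite !inE eqxx.
have compv : component (del_rel e X) v = [set v].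
  apply/setP => y; rewrite !inE; apply/idP/eqP => [hc|->]; last exact: connect0.
  have cl' : forall a b, a \in [set v] -> del_rel e X a b -> b \in [set v].
    move=> a b; rewrite inE => /eqP -> /and3P[_ bX evb].
    by move: bX; rewrite /X /N in_setU inE evb.
  have vv : v \in [set v] by rewrite inE.
  by have := closure_conn cl' vv hc; rewrite inE => /eqP.
have c1 : (1 <= c_comp e X 1)%N.
  apply/card_gt0P; exists [set v]; rewrite inE cards1 eqxx andbT.
  by rewrite -compv; apply: imset_f; rewrite inE.
have sum1 : (1 <= \sum_(0 <= j < k) c_comp e X (2 * j + 1))%N.
  rewrite big_ltn; last by lia.
  rewrite muln0 add0n; exact: leq_trans c1 (leq_addr _ _).
have hX : (#|X| <= 2 * k + 3)%N.
  apply: leq_trans (leq_card_setU _ _) _; rewrite Ycard; move: dv; rewrite -/N; move: #|N| => n; lia.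
exists X; split.
  by rewrite -Ycard; apply: subset_leq_card; apply: subsetUr.
rewrite ler_pdivrMr ?ltr0n ?expn_gt0; last by lia.
rewrite -natrM ler_nat.
move: sum1 hX; move: (\sum_(0 <= j < k) c_comp e X (2 * j + 1)) => S. nia.
Qed.
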